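(* Every Hopf heap $(C,\chi)$ admits a Grunspan map; explicitly $\vartheta(c)=\sum[c_{(1)},[e_{(1)},c_{(3)},c_{(2)}],e_{(2)}]$ for all $c\in C$, where $e\in C$ is any element with $\varepsilon(e)=1$.
   Context: Work over a field $\mathbb{F}$; coalgebras coassociative, counital, of dimension at least one, Sweedler notation; $C^{\mathrm{co}}$ is the co-opposite coalgebra. A Hopf heap is a coalgebra $C$ with a coalgebra map $\chi:C\otimes C^{\mathrm{co}}\otimes C\to C$, $a\otimes b\otimes c\mapsto[a,b,c]$ (so $\Delta[a,b,c]=\sum[a_{(1)},b_{(2)},c_{(1)}]\otimes[a_{(2)},b_{(1)},c_{(2)}]$, $\varepsilon[a,b,c]=\varepsilon(a)\varepsilon(b)\varepsilon(c)$), such that $[[a,b,c],d,e]=[a,b,[c,d,e]]$ and $\sum[c_{(1)},c_{(2)},a]=\sum[a,c_{(1)},c_{(2)}]=\varepsilon(c)a$ for all $a,b,c,d,e\in C$. A Grunspan map is a coalgebra map $\vartheta:C\to C$ with $[[a,b,\vartheta(c)],d,e]=[a,[d,c,b],e]$ for all $a,b,c,d,e\in C$. *)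

(* Defs.v *)
From HB Require Import structures.
From mathcomp Require Import all_boot all_order all_algebra.
Set Implicit Arguments. Unset Strict Implicit. Unset Printing Implicit Defensive.
Import GRing.Theory.
Local Open Scope ring_scope.

(* An element of V (x) V is represented
   by a finite list of pairs [(x_i, y_i)] standing for sum_i x_i (x) y_i; two
   representatives denote the same tensor iff every bilinear map (into every
   F-vector space) takes the same value on them (universal property of the
   tensor product).  Likewise for V (x) V (x) V with trilinear maps. *)

Section Coalg.
Variable F : fieldType.

Definition lin (U W : lmodType F) (f : U -> W) : Prop :=
  forall (a : F) (u v : U), f (a *: u + v) = a *: f u + f v.

Definition bilin (U W : lmodType F) (b : U -> U -> W) : Prop :=
  (forall x, lin (b x)) /\ (forall y, lin (fun x => b x y)).

Definition trilin (U W : lmodType F) (t : U -> U -> U -> W) : Prop :=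
  (forall y z, lin (fun x => t x y z)) /\ (forall x z, lin (fun y => t x y z))
  /\ (forall x y, lin (t x y)).

Definition teq2 (V : lmodType F) (s t : seq (V * V)) : Prop :=
  forall (W : lmodType F) (b : V -> V -> W), bilin b ->
    \sum_(p <- s) b p.1 p.2 = \sum_(p <- t) b p.1 p.2.

(* equality in V (x) V (x) V; triples are ((x, y), z) for x (x) y (x) z *)
Definition teq3 (V : lmodType F) (s t : seq (V * V * V)) : Prop :=
  forall (W : lmodType F) (b : V -> V -> V -> W), trilin b ->
    \sum_(p <- s) b p.1.1 p.1.2 p.2 = \sum_(p <- t) b p.1.1 p.1.2 p.2.

(* Sweedler representative of (Delta (x) id) Delta c : c_(1) (x) c_(2) (x) c_(3) *)
Definition cop3 (V : lmodType F) (cop : V -> seq (V * V)) (c : V)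
  : seq (V * V * V) :=
  [seq (q.1, q.2, p.2) | p <- cop c, q <- cop p.1].

Definition coalgebra (V : lmodType F) (cop : V -> seq (V * V)) (cou : V -> F)
  : Prop :=
  [/\ forall (a : F) (u v : V),
        teq2 (cop (a *: u + v)) ([seq (a *: p.1, p.2) | p <- cop u] ++ cop v),
      forall (a : F) (u v : V), cou (a *: u + v) = a * cou u + cou v,
      forall c : V,
        teq3 (cop3 cop c) [seq (p.1, q.1, q.2) | p <- cop c, q <- cop p.2],
      forall c : V, \sum_(p <- cop c) cou p.1 *: p.2 = c
    & forall c : V, \sum_(p <- cop c) cou p.2 *: p.1 = c].

(* chi : C (x) C^co (x) C -> C, given as a trilinear map, is a coalgebra map *)
Definition heap_coalg_map (V : lmodType F) (cop : V -> seq (V * V))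
  (cou : V -> F) (chi : V -> V -> V -> V) : Prop :=
  [/\ trilin chi,
      forall a b c : V,
        teq2 (cop (chi a b c))
          [seq (chi p.1 qr.1.2 qr.2.1, chi p.2 qr.1.1 qr.2.2)
             | p <- cop a, qr <- [seq (q, r) | q <- cop b, r <- cop c]]
    & forall a b c : V, cou (chi a b c) = cou a * cou b * cou c].

Definition hopf_heap (V : lmodType F) (cop : V -> seq (V * V))
  (cou : V -> F) (chi : V -> V -> V -> V) : Prop :=
  [/\ heap_coalg_map cop cou chi,
      forall a b c d e : V, chi (chi a b c) d e = chi a b (chi c d e),
      forall a c : V, \sum_(p <- cop c) chi p.1 p.2 a = cou c *: a
    & forall a c : V, \sum_(p <- cop c) chi a p.1 p.2 = cou c *: a].

Definition coalg_endo (V : lmodType F) (cop : V -> seq (V * V))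
  (cou : V -> F) (theta : V -> V) : Prop :=
  [/\ lin theta,
      forall c : V, teq2 (cop (theta c)) [seq (theta p.1, theta p.2) | p <- cop c]
    & forall c : V, cou (theta c) = cou c].

Definition grunspan (V : lmodType F) (cop : V -> seq (V * V))
  (cou : V -> F) (chi : V -> V -> V -> V) (theta : V -> V) : Prop :=
  coalg_endo cop cou theta /\
  forall a b c d e : V, chi (chi a b (theta c)) d e = chi a (chi d c b) e.

(* theta(c) = sum [c_(1), [e_(1), c_(3), c_(2)], e_(2)] *)
Definition heap_theta (V : lmodType F) (cop : V -> seq (V * V))
  (chi : V -> V -> V -> V) (e : V) (c : V) : V :=
  \sum_(t <- cop3 cop c) \sum_(r <- cop e) chi t.1.1 (chi r.1 t.2 t.1.2) r.2.

End Coalg.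

(* Main.v *)
From HB Require Import structures.
Require Import Defs.
From mathcomp Require Import all_boot all_order all_algebra ring.
Set Implicit Arguments. Unset Strict Implicit. Unset Printing Implicit Defensive.
Import GRing.Theory.
Local Open Scope ring_scope.

Section Lin.
Variable F : fieldType.
Implicit Types U W : lmodType F.

Lemma lin_add U W (f : U -> W) : lin f -> forall u v, f (u + v) = f u + f v.
Proof. by move=> h u v; have := h 1 u v; rewrite !scale1r. Qed.
Lemma lin0 U W (f : U -> W) : lin f -> f 0 = 0.
Proof. by move=> h; have := lin_add h 0 0; rewrite addr0 -{1}[f 0]addr0 => /addrI ->. Qed.
Lemma linZ U W (f : U -> W) : lin f -> forall a u, f (a *: u) = a *: f u.
Proof. by move=> h a u; have := h a u 0; rewrite addr0 lin0 // addr0. Qed.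
Lemma lin_sum U W (f : U -> W) I (s : seq I) (G : I -> U) : lin f ->
  f (\sum_(i <- s) G i) = \sum_(i <- s) f (G i).
Proof.
move=> h; elim: s => [|i s IH]; first by rewrite !big_nil lin0.
by rewrite !big_cons lin_add // IH.
Qed.
Lemma lin_id U : lin (fun x : U => x). Proof. by []. Qed.
Lemma lin_comp U U' W (f : U' -> W) (g : U -> U') :
  lin f -> lin g -> lin (fun x => f (g x)).
Proof. by move=> hf hg a u v; rewrite hg hf. Qed.
Lemma lin_sumf U W I (s : seq I) (G : I -> U -> W) :
  (forall i, lin (G i)) -> lin (fun x => \sum_(i <- s) G i x).
Proof.
move=> h a u v; rewrite scaler_sumr -big_split /=.
by apply: eq_bigr => i _; rewrite h.
Qed.
Lemma lin_scale U W (f : U -> W) (k : F) : lin f -> lin (fun x => k *: f x).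
Proof. by move=> h a u v; rewrite h scalerDr !scalerA mulrC. Qed.
Lemma lin_scal U W (g : U -> F) (w : W) :
  (forall a u v, g (a *: u + v) = a * g u + g v) -> lin (fun x => g x *: w).
Proof. by move=> h a u v; rewrite h scalerDl scalerA. Qed.
End Lin.

Section Heap.
Variable F : fieldType.
Variable V : lmodType F.
Variable cop : V -> seq (V * V).
Variable cou : V -> F.
Variable chi : V -> V -> V -> V.
Hypothesis Hco : coalgebra cop cou.
Hypothesis Hh : hopf_heap cop cou chi.

Definition sw (W : lmodType F) (c : V) (f : V -> V -> W) : W :=
  \sum_(p <- cop c) f p.1 p.2.

Lemma cou_lin a u v : cou (a *: u + v) = a * cou u + cou v.
Proof. by case: Hco. Qed.

Lemma chi_tri : trilin chi. Proof. by case: Hh => -[]. Qed.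
Lemma lin_chi1 (E : V -> V) y z : lin E -> lin (fun x => chi (E x) y z).
Proof. move=> h; apply: (lin_comp (f := fun t => chi t y z)) => //; by case: chi_tri. Qed.
Lemma lin_chi2 (E : V -> V) y z : lin E -> lin (fun x => chi y (E x) z).
Proof. move=> h; apply: (lin_comp (f := fun t => chi y t z)) => //; by case: chi_tri => _ []. Qed.
Lemma lin_chi3 (E : V -> V) y z : lin E -> lin (fun x => chi y z (E x)).
Proof. move=> h; apply: (lin_comp (f := fun t => chi y z t)) => //; by case: chi_tri => _ []. Qed.

Lemma sw_lin (W : lmodType F) (f : V -> V -> W) :
  (forall x, lin (f x)) -> (forall y, lin (fun x => f x y)) ->
  lin (fun c => sw c f).
Proof.
move=> h1 h2 a u v; case: Hco => Hc _ _ _ _.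
rewrite /sw (Hc a u v W f) ?big_cat ?big_map /=; last by split.
rewrite scaler_sumr; congr (_ + _); apply: eq_bigr => p _ /=.
exact: (linZ (h2 p.2)).
Qed.

Lemma lin_swE (W : lmodType F) (E : V -> V) (f : V -> V -> W) :
  lin E -> (forall x, lin (f x)) -> (forall y, lin (fun x => f x y)) ->
  lin (fun c => sw (E c) f).
Proof. by move=> hE h1 h2; apply: (lin_comp (f := fun c => sw c f)) => //; apply: sw_lin. Qed.

Lemma lin_swF (W : lmodType F) c (f : V -> V -> V -> W) :
  (forall p q, lin (fun x => f x p q)) -> lin (fun x => sw c (f x)).
Proof. by move=> h; rewrite /sw; apply: lin_sumf => p; apply: h. Qed.

Ltac lin_tac := repeat (first
  [ apply: lin_id | apply: lin_chi1 | apply: lin_chi2 | apply: lin_chi3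
  | apply: lin_swF | apply: lin_swE | apply: lin_scale | move=> ? /= ]).


Lemma sw_ext (W : lmodType F) c (f g : V -> V -> W) :
  (forall x y, f x y = g x y) -> sw c f = sw c g.
Proof. by move=> h; apply: eq_bigr => p _; apply: h. Qed.

Lemma sw_exch (W : lmodType F) a b (G : V -> V -> V -> V -> W) :
  sw a (fun x y => sw b (G x y)) = sw b (fun z w => sw a (fun x y => G x y z w)).
Proof. by rewrite /sw exchange_big. Qed.

Lemma sw_pull (W W' : lmodType F) (L : W -> W') c (f : V -> V -> W) :
  lin L -> L (sw c f) = sw c (fun x y => L (f x y)).
Proof. by move=> h; rewrite /sw lin_sum. Qed.

Lemma sw_scale (W : lmodType F) k c (f : V -> V -> W) :
  k *: sw c f = sw c (fun x y => k *: f x y).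
Proof. by rewrite /sw scaler_sumr. Qed.

Lemma sw_scaleE (W : lmodType F) k c (f : V -> V -> W) :
  sw c (fun x y => k *: f x y) = k *: sw c f.
Proof. by rewrite sw_scale. Qed.

Lemma cou_sum I (s : seq I) (G : I -> V) : cou (\sum_(i <- s) G i) = \sum_(i <- s) cou (G i).
Proof.
have c0 : cou 0 = 0.
  by have h := cou_lin 1 0 0; rewrite scale1r addr0 mul1r in h; apply: (addIr (cou 0)); rewrite add0r -h.
elim: s => [|i s IH]; first by rewrite !big_nil.
rewrite !big_cons -IH; have := cou_lin 1 (G i) (\sum_(j <- s) G j).
by rewrite scale1r mul1r.
Qed.
Lemma couZ a u : cou (a *: u) = a * cou u.
Proof.
have c0 : cou 0 = 0.
  by have h := cou_lin 1 0 0; rewrite scale1r addr0 mul1r in h; apply: (addIr (cou 0)); rewrite add0r -h.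
by rewrite -[a *: u]addr0 cou_lin c0 addr0.
Qed.

Lemma sw_cou_l (W : lmodType F) (g : V -> W) c :
  lin g -> sw c (fun x y => cou x *: g y) = g c.
Proof.
case: Hco => _ _ _ h _ hg.
transitivity (g (sw c (fun x y => cou x *: y))); last by rewrite /sw h.
by rewrite (sw_pull c _ hg); apply: sw_ext => x y; rewrite linZ.
Qed.
Lemma sw_cou_r (W : lmodType F) (g : V -> W) c :
  lin g -> sw c (fun x y => cou y *: g x) = g c.
Proof.
case: Hco => _ _ _ _ h hg.
transitivity (g (sw c (fun x y => cou y *: x))); last by rewrite /sw h.
by rewrite (sw_pull c _ hg); apply: sw_ext => x y; rewrite linZ.
Qed.
Lemma sw_cou2 c : \sum_(p <- cop c) cou p.1 * cou p.2 = cou c.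
Proof.
case: Hco => _ _ _ h _; rewrite -{2}(h c) cou_sum.
by apply: eq_bigr => p _; rewrite couZ.
Qed.

Ltac bilin_tac := split => ? /=; lin_tac.
Ltac trilin_tac := split; [|split]; move=> ? ? /=; lin_tac.

Lemma sw_coassoc (W : lmodType F) c (h : V -> V -> V -> W) : trilin h ->
  sw c (fun x y => sw x (fun x1 x2 => h x1 x2 y)) =
  sw c (fun x y => sw y (fun y1 y2 => h x y1 y2)).
Proof.
case: Hco => _ _ H3 _ _ th; have := H3 c W h th.
by rewrite /cop3 /sw !big_allpairs_dep.
Qed.

Lemma sw_chi (W : lmodType F) a b c (f : V -> V -> W) : bilin f ->
  sw (chi a b c) f = sw a (fun a1 a2 => sw b (fun b1 b2 => sw c (fun c1 c2 =>
     f (chi a1 b2 c1) (chi a2 b1 c2)))).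
Proof.
case: Hh => -[_ H _] _ _ _ bf; rewrite /sw (H a b c W f bf) big_allpairs_dep.
apply: eq_bigr => p _; rewrite big_allpairs_dep /=.
by apply: eq_bigr => q _.
Qed.

Lemma chi_assoc a b c d e : chi (chi a b c) d e = chi a b (chi c d e).
Proof. by case: Hh. Qed.
Lemma chi_Lc a c : sw c (fun x y => chi x y a) = cou c *: a.
Proof. by case: Hh => _ _ h _; apply: h. Qed.
Lemma chi_Rc a c : sw c (fun x y => chi a x y) = cou c *: a.
Proof. by case: Hh => _ _ _ h; apply: h. Qed.
Lemma cou_chi a b c : cou (chi a b c) = cou a * cou b * cou c.
Proof. by case: Hh => -[]. Qed.

Lemma chiZ1 k a b c : chi (k *: a) b c = k *: chi a b c.
Proof. by rewrite (linZ (lin_chi1 b c (lin_id (U:=V)))). Qed.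
Lemma chiZ2 k a b c : chi a (k *: b) c = k *: chi a b c.
Proof. by rewrite (linZ (lin_chi2 a c (lin_id (U:=V)))). Qed.
Lemma chiZ3 k a b c : chi a b (k *: c) = k *: chi a b c.
Proof. by rewrite (linZ (lin_chi3 a b (lin_id (U:=V)))). Qed.


Lemma pull1 c (f : V -> V -> V) b d : chi (sw c f) b d = sw c (fun x y => chi (f x y) b d).
Proof. by rewrite (sw_pull (L := fun t => chi t b d)) //; apply: lin_chi1. Qed.
Lemma pull2 c (f : V -> V -> V) a d : chi a (sw c f) d = sw c (fun x y => chi a (f x y) d).
Proof. by rewrite (sw_pull (L := fun t => chi a t d)) //; apply: lin_chi2. Qed.
Lemma pull3 c (f : V -> V -> V) a b : chi a b (sw c f) = sw c (fun x y => chi a b (f x y)).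
Proof. by rewrite (sw_pull (L := fun t => chi a b t)) //; apply: lin_chi3. Qed.

Lemma coA_l (W : lmodType F) c (h : V -> V -> V -> W) R : trilin h ->
  sw c (fun x y => sw y (fun y1 y2 => h x y1 y2)) = R ->
  sw c (fun x y => sw x (fun x1 x2 => h x1 x2 y)) = R.
Proof. by move=> th <-; apply: sw_coassoc. Qed.
Lemma coA_r (W : lmodType F) c (h : V -> V -> V -> W) R : trilin h ->
  sw c (fun x y => sw x (fun x1 x2 => h x1 x2 y)) = R ->
  sw c (fun x y => sw y (fun y1 y2 => h x y1 y2)) = R.
Proof. by move=> th <-; rewrite sw_coassoc. Qed.
Lemma ex_l (W : lmodType F) a b (G : V -> V -> V -> V -> W) R :
  sw b (fun z w => sw a (fun x y => G x y z w)) = R ->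
  sw a (fun x y => sw b (G x y)) = R.
Proof. by move=> <-; apply: sw_exch. Qed.

Variable u : V.
Hypothesis Hu : cou u = 1.

Definition Gb b p q w := sw b (fun b1 b2 => chi b1 (chi p q b2) w).
Definition Hb b w q p := sw b (fun b1 b2 => chi w (chi b1 q p) b2).

Lemma Rinv p q b w :
  sw p (fun p1 p2 => sw q (fun q1 q2 => chi p1 q2 (Gb b p2 q1 w))) =
  (cou p * cou q * cou b) *: w.
Proof.
rewrite -cou_chi -(chi_Lc w (chi p q b)) sw_chi; last by bilin_tac.
apply: sw_ext => ? ?; apply: sw_ext => ? ?; rewrite /Gb pull3.
by apply: sw_ext => ? ?; rewrite chi_assoc.
Qed.


Lemma cl_chi2 c a b : sw c (fun x y => cou x *: chi a y b) = chi a c b.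
Proof. by rewrite sw_cou_l //; lin_tac. Qed.

Lemma inner_lem p q v z s2 s1 :
  sw p (fun p1 p2 => sw q (fun x y => sw s1 (fun t1 t2 =>
     chi (chi z (chi p1 y t1) (chi p2 x t2)) s2 v))) =
  (cou p * cou q * cou s1) *: chi z s2 v.
Proof.
rewrite -cou_chi -chiZ1 -chi_Rc pull1 sw_chi //; by bilin_tac.
Qed.

Lemma LI p q v :
  sw p (fun p1 p2 => sw q (fun q1 q2 => Gb u p1 q2 (chi p2 q1 v))) =
  (cou p * cou q) *: v.
Proof.
have body : forall p1 p2 q1 q2 r1 r2,
  chi r1 (chi p1 q2 r2) (chi p2 q1 v) =
  sw r2 (fun s1 s2 => sw s1 (fun t1 t2 =>
     chi (chi r1 (chi p1 q2 t1) (chi p2 q1 t2)) s2 v)).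
  move=> p1 p2 q1 q2 r1 r2.
  symmetry; apply: coA_l; first by trilin_tac.
  cbv beta.
  transitivity (sw r2 (fun s1 s2 => cou s2 *: chi r1 (chi p1 q2 s1) (chi p2 q1 v))); last first.
    by rewrite sw_cou_r //; lin_tac.
  apply: sw_ext => s1 s2.
  under sw_ext => t1 t2 do rewrite !chi_assoc.
  by rewrite -pull3 -pull3 chi_Lc chiZ3 chiZ3.
rewrite /Gb.
under sw_ext => p1 p2 do under sw_ext => q1 q2 do under sw_ext => r1 r2 do rewrite body.
under sw_ext => p1 p2 do rewrite sw_exch.
rewrite sw_exch.
under sw_ext => z w do under sw_ext => p1 p2 do rewrite sw_exch.
under sw_ext => z w do rewrite sw_exch.
under sw_ext => z w do under sw_ext => s1 s2 do rewrite inner_lem -scalerA.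
under sw_ext => z w do rewrite sw_scaleE cl_chi2.
by rewrite sw_scaleE chi_Lc Hu scale1r.
Qed.


Lemma pullG b p q c (f : V -> V -> V) : Gb b p q (sw c f) = sw c (fun x y => Gb b p q (f x y)).
Proof. by rewrite /Gb; rewrite sw_exch; apply: sw_ext => x y; rewrite pull3. Qed.
Lemma GbZ b p q k w : Gb b p q (k *: w) = k *: Gb b p q w.
Proof. by rewrite /Gb sw_scale; apply: sw_ext => x y; rewrite chiZ3. Qed.

Lemma clG2 b p w c k : sw c (fun x y => cou x *: (k *: Gb b p y w)) = k *: Gb b p c w.
Proof. by rewrite sw_cou_l // /Gb; lin_tac. Qed.
Lemma crG1 b q w c k : sw c (fun x y => cou y *: (k *: Gb b x q w)) = k *: Gb b c q w.
Proof. by rewrite sw_cou_r // /Gb; lin_tac. Qed.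
Lemma clG1 b q w c : sw c (fun x y => cou x *: Gb b y q w) = Gb b c q w.
Proof. by rewrite sw_cou_l // /Gb; lin_tac. Qed.
Lemma crG2 b p w c k : sw c (fun x y => cou y *: (k *: Gb b p x w)) = k *: Gb b p c w.
Proof. by rewrite sw_cou_r // /Gb; lin_tac. Qed.

Lemma Kp b p q w : Gb b p q w = cou b *: Gb u p q w.
Proof.
pose E pa pb pc qa qb qc := Gb u pa qc (chi pb qb (Gb b pc qa w)).
have e1 : sw p (fun pa pr => sw pr (fun pb pc => sw q (fun qr qc => sw qr (fun qa qb =>
            E pa pb pc qa qb qc)))) = cou b *: Gb u p q w.
  rewrite /E.
  under sw_ext => pa pr do rewrite sw_exch.
  under sw_ext => pa pr do under sw_ext => qr qc do under sw_ext => pb pc do rewrite -pullG.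
  under sw_ext => pa pr do under sw_ext => qr qc do rewrite -pullG Rinv GbZ -!scalerA.
  under sw_ext => pa pr do rewrite sw_scaleE clG2.
  by rewrite crG1.
have e2 : sw p (fun pa pr => sw pr (fun pb pc => sw q (fun qr qc => sw qr (fun qa qb =>
            E pa pb pc qa qb qc)))) = Gb b p q w.
  rewrite /E.
  under sw_ext => pa pr.
    under sw_ext => pb pc.
      rewrite sw_coassoc; last by rewrite /Gb; trilin_tac.
      over.
    over.
  apply: coA_r; first by rewrite /Gb; trilin_tac.
  cbv beta.
  under sw_ext => pl pc do rewrite sw_exch.
  under sw_ext => pl pc do under sw_ext => z w0 do rewrite LI mulrC -scalerA.
  under sw_ext => pl pc do rewrite crG2.
  by rewrite clG1.
by rewrite -e2 e1.
Qed.


Lemma Linv b q p w :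
  sw q (fun q1 q2 => sw p (fun p1 p2 => chi (Hb b w q2 p1) q1 p2)) =
  (cou b * cou q * cou p) *: w.
Proof.
rewrite -cou_chi -(chi_Rc w (chi b q p)) sw_chi; last by bilin_tac.
rewrite [RHS]sw_exch; apply: sw_ext => q1 q2; rewrite [RHS]sw_exch; apply: sw_ext => p1 p2.
by rewrite /Hb pull1; apply: sw_ext => b1 b2; rewrite chi_assoc.
Qed.

Lemma inner_lem' q p x s1 s2 r2 :
  sw s2 (fun t1 t2 => sw q (fun q1 q2 => sw p (fun p1 p2 =>
     chi x s1 (chi (chi t1 q2 p1) (chi t2 q1 p2) r2)))) =
  (cou s2 * cou q * cou p) *: chi x s1 r2.
Proof. by rewrite -cou_chi -chiZ3 -chi_Lc pull3 sw_chi //; bilin_tac. Qed.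

Lemma crchi2 c a b k : sw c (fun x y => cou y *: (k *: chi a x b)) = k *: chi a c b.
Proof. by rewrite sw_cou_r //; lin_tac. Qed.

Lemma LI' q p x :
  sw q (fun q1 q2 => sw p (fun p1 p2 => Hb u (chi x q2 p1) q1 p2)) =
  (cou q * cou p) *: x.
Proof.
have body : forall q1 q2 p1 p2 r1 r2,
  chi (chi x q2 p1) (chi r1 q1 p2) r2 =
  sw r1 (fun s1 s2 => sw s2 (fun t1 t2 =>
     chi x s1 (chi (chi t1 q2 p1) (chi t2 q1 p2) r2))).
  move=> q1 q2 p1 p2 r1 r2.
  symmetry; apply: coA_r; first by trilin_tac.
  cbv beta.
  transitivity (sw r1 (fun s1 s2 => cou s1 *: chi (chi x q2 p1) (chi s2 q1 p2) r2)); last first.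
    by rewrite sw_cou_l //; lin_tac.
  apply: sw_ext => s1 s2.
  under sw_ext => t1 t2 do rewrite -chi_assoc -chi_assoc.
  by rewrite -pull1 -pull1 chi_Rc chiZ1 chiZ1.
rewrite /Hb.
under sw_ext => q1 q2 do under sw_ext => p1 p2 do under sw_ext => r1 r2 do rewrite body.
under sw_ext => q1 q2 do rewrite sw_exch.
rewrite sw_exch.
under sw_ext => r1 r2 do under sw_ext => q1 q2 do rewrite sw_exch.
under sw_ext => r1 r2 do rewrite sw_exch.
under sw_ext => r1 r2 do under sw_ext => s1 s2 do under sw_ext => q1 q2 do rewrite sw_exch.
under sw_ext => r1 r2 do under sw_ext => s1 s2 do rewrite sw_exch.
under sw_ext => r1 r2 do under sw_ext => s1 s2 do rewrite inner_lem' -mulrA -scalerA.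
under sw_ext => r1 r2 do rewrite crchi2.
by rewrite sw_scaleE chi_Rc Hu scale1r.
Qed.


Lemma pullH1 b q p c (f : V -> V -> V) : Hb b (sw c f) q p = sw c (fun x y => Hb b (f x y) q p).
Proof. by rewrite /Hb sw_exch; apply: sw_ext => x y; rewrite pull1. Qed.
Lemma HbZ1 b q p k w : Hb b (k *: w) q p = k *: Hb b w q p.
Proof. by rewrite /Hb sw_scale; apply: sw_ext => x y; rewrite chiZ1. Qed.
Lemma sc3 (a b c : F) (X : V) : (a * b * c) *: X = c *: ((b * a) *: X).
Proof. by rewrite !scalerA; congr (_ *: _); ring. Qed.
Lemma clH4 b w q c k : sw c (fun x y => cou x *: (k *: Hb b w q y)) = k *: Hb b w q c.
Proof. by rewrite sw_cou_l // /Hb; lin_tac. Qed.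
Lemma crH3 b w p c k : sw c (fun x y => cou y *: (k *: Hb b w x p)) = k *: Hb b w c p.
Proof. by rewrite sw_cou_r // /Hb; lin_tac. Qed.
Lemma crH4 b w q c k : sw c (fun x y => cou y *: (k *: Hb b w q x)) = k *: Hb b w q c.
Proof. by rewrite sw_cou_r // /Hb; lin_tac. Qed.
Lemma clH3 b w p c : sw c (fun x y => cou x *: Hb b w y p) = Hb b w c p.
Proof. by rewrite sw_cou_l // /Hb; lin_tac. Qed.

Lemma Kpp b w q p : Hb b w q p = cou b *: Hb u w q p.
Proof.
pose E q1 q2 q3 p1 p2 p3 := Hb u (chi (Hb b w q3 p1) q2 p2) q1 p3.
have e1 : sw q (fun q1 qr => sw qr (fun q2 q3 => sw p (fun pl p3 => sw pl (fun p1 p2 =>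
            E q1 q2 q3 p1 p2 p3)))) = cou b *: Hb u w q p.
  rewrite /E.
  under sw_ext => q1 qr do rewrite sw_exch.
  under sw_ext => q1 qr do under sw_ext => pl p3 do under sw_ext => q2 q3 do rewrite -pullH1.
  under sw_ext => q1 qr do under sw_ext => pl p3 do rewrite -pullH1 Linv HbZ1 sc3.
  under sw_ext => q1 qr do rewrite clH4 -scalerA.
  by rewrite crH3.
have e2 : sw q (fun q1 qr => sw qr (fun q2 q3 => sw p (fun pl p3 => sw pl (fun p1 p2 =>
            E q1 q2 q3 p1 p2 p3)))) = Hb b w q p.
  rewrite /E.
  apply: coA_r; first by rewrite /Hb; trilin_tac.
  cbv beta.
  under sw_ext => ql q3.
    under sw_ext => q1 q2.
      rewrite sw_coassoc; last by rewrite /Hb; trilin_tac.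
      over.
    over.
  under sw_ext => ql q3 do rewrite sw_exch.
  under sw_ext => ql q3 do under sw_ext => p1 pr do rewrite LI' mulrC -scalerA.
  under sw_ext => ql q3 do rewrite crH4.
  by rewrite clH3.
by rewrite -e2 e1.
Qed.


Lemma Kp' b p q w : sw b (fun b1 b2 => chi b1 (chi p q b2) w) = cou b *: Gb u p q w.
Proof. exact: Kp. Qed.
Lemma Kpp' b w q p : sw b (fun b1 b2 => chi w (chi b1 q p) b2) = cou b *: Hb u w q p.
Proof. exact: Kpp. Qed.

Definition th c := heap_theta cop chi u c.

Lemma th_sw c : th c = sw c (fun x y => sw x (fun c1 c2 => sw u (fun r1 r2 => chi c1 (chi r1 y c2) r2))).
Proof. by rewrite /th /heap_theta /cop3 big_allpairs_dep. Qed.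

Lemma clG2' b p w c : sw c (fun x y => cou x *: Gb b p y w) = Gb b p c w.
Proof. by rewrite sw_cou_l // /Gb; lin_tac. Qed.

Lemma th_alt c : th c = sw u (fun r1 r2 => Gb u r1 c r2).
Proof.
rewrite th_sw.
under sw_ext => x y do rewrite sw_exch.
under sw_ext => x y do under sw_ext => r1 r2 do rewrite Kp'.
by rewrite sw_exch; apply: sw_ext => r1 r2; rewrite clG2'.
Qed.

Lemma Theta c p : sw p (fun p1 p2 => Gb u p1 c p2) = cou p *: th c.
Proof.
rewrite /Gb sw_exch.
under sw_ext => v1 v2 do rewrite Kpp'.
rewrite sw_scaleE th_alt /Gb /Hb sw_exch //.
Qed.

Lemma crchi2' c a b : sw c (fun x y => cou y *: chi a x b) = chi a c b.
Proof. by rewrite sw_cou_r //; lin_tac. Qed.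
Lemma clchi1 c b d : sw c (fun x y => cou x *: chi y b d) = chi c b d.
Proof. by rewrite sw_cou_l //; lin_tac. Qed.

Lemma Mflat a d c b e : chi a (chi d c b) e = chi a b (Gb u d c e).
Proof.
transitivity (sw b (fun x y => cou x *: chi a (chi d c y) e)).
  by rewrite sw_cou_l //; lin_tac.
under sw_ext => x y do rewrite -chiZ1 -chi_Rc pull1.
under sw_ext => x y do under sw_ext => x1 x2 do rewrite chi_assoc.
rewrite sw_coassoc; last by trilin_tac.
under sw_ext => x y do rewrite -pull3 Kp' chiZ3.
by rewrite crchi2'.
Qed.

Lemma GbChi x c y1 y2 e : Gb u x c (chi y1 y2 e) = chi (Gb u x c y1) y2 e.
Proof. by rewrite /Gb pull1; apply: sw_ext => v1 v2; rewrite chi_assoc. Qed.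

Lemma Gflat d c e : Gb u d c e = chi (th c) d e.
Proof.
transitivity (sw d (fun x y => cou y *: Gb u x c e)).
  by rewrite sw_cou_r // /Gb; lin_tac.
under sw_ext => x y do rewrite -GbZ -chi_Lc pullG.
under sw_ext => x y do under sw_ext => y1 y2 do rewrite GbChi.
apply: coA_r; first by rewrite /Gb; trilin_tac.
cbv beta.
under sw_ext => x y do rewrite -pull1 Theta chiZ1.
by rewrite cl_chi2.
Qed.

Lemma grunspan_th a b c d e : chi (chi a b (th c)) d e = chi a (chi d c b) e.
Proof. by rewrite chi_assoc Mflat Gflat. Qed.


Lemma th_lin : lin th.
Proof.
move=> a x y; rewrite !th_alt.
have h : lin (fun c => sw u (fun r1 r2 => Gb u r1 c r2)) by rewrite /Gb; lin_tac.
exact: h.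
Qed.

Lemma th_cou c : cou (th c) = cou c.
Proof.
rewrite th_alt /Gb /sw cou_sum.
transitivity (\sum_(r <- cop u) \sum_(v <- cop u) (cou v.1 * cou v.2) * (cou r.1 * cou r.2 * cou c)).
  apply: eq_bigr => r _; rewrite cou_sum; apply: eq_bigr => v _; rewrite !cou_chi; ring.
under eq_bigr => r _ do rewrite -big_distrl /= sw_cou2 Hu mul1r.
by rewrite -big_distrl /= sw_cou2 Hu !mul1r.
Qed.

Section Split4.
Variable W : lmodType F.
Variable h : V -> V -> V -> V -> W.
Hypothesis h1 : forall b c d, lin (fun a => h a b c d).
Hypothesis h2 : forall a c d, lin (fun b => h a b c d).
Hypothesis h3 : forall a b d, lin (fun c => h a b c d).
Hypothesis h4 : forall a b c, lin (fun d => h a b c d).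

Lemma split4 c :
  sw c (fun v1 v2 => sw v1 (fun a1 a2 => sw v2 (fun w1 w2 => h a1 a2 w1 w2))) =
  sw c (fun v1 v2 => sw v1 (fun x1 x2 => sw x2 (fun m1 m2 => h x1 m1 m2 v2))).
Proof.
under sw_ext => v1 v2 do rewrite sw_exch.
apply: coA_r.
  split; [|split] => ? ? /=.
  - by apply: sw_lin => ? /=; [apply: h2 | apply: h1].
  - by apply: lin_swF => ? ?; apply: h3.
  - by apply: lin_swF => ? ?; apply: h4.
cbv beta.
apply: sw_ext => v1 v2.
rewrite sw_coassoc //.
Qed.
End Split4.


Section Delta.
Variable W : lmodType F.
Variable f : V -> V -> W.
Hypothesis bf : bilin f.

Lemma lin_fa (E : V -> V) y : lin E -> lin (fun x => f (E x) y).
Proof. by move=> h; apply: (lin_comp (f := fun t => f t y)) => //; case: bf. Qed.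
Lemma lin_fb (E : V -> V) y : lin E -> lin (fun x => f y (E x)).
Proof. by move=> h; apply: (lin_comp (f := fun t => f y t)) => //; case: bf. Qed.

Ltac lin_tacf := repeat (first
  [ apply: lin_id | apply: lin_chi1 | apply: lin_chi2 | apply: lin_chi3
  | apply: lin_fa | apply: lin_fb
  | apply: lin_swF | apply: lin_swE | apply: lin_scale | move=> ? /= ]).

Lemma pullf1 c (g : V -> V -> V) B : f (sw c g) B = sw c (fun x y => f (g x y) B).
Proof. by rewrite (sw_pull (L := fun t => f t B)) //; apply: lin_fa. Qed.
Lemma pullf2 c (g : V -> V -> V) A : f A (sw c g) = sw c (fun x y => f A (g x y)).
Proof. by rewrite (sw_pull (L := fun t => f A t)) //; apply: lin_fb. Qed.
Lemma fZ1 k A B : f (k *: A) B = k *: f A B.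
Proof. by rewrite (linZ (lin_fa B (lin_id (U:=V)))). Qed.
Lemma fZ2 k A B : f A (k *: B) = k *: f A B.
Proof. by rewrite (linZ (lin_fb A (lin_id (U:=V)))). Qed.

Lemma swsw c (g : V -> V -> V) : sw (sw c g) f = sw c (fun x y => sw (g x y) f).
Proof. by rewrite (sw_pull (L := fun t => sw t f)) //; apply: sw_lin => ?; case: bf. Qed.

Lemma sw_chi2 a p q r b :
  sw (chi a (chi p q r) b) f =
  sw a (fun a1 a2 => sw p (fun p1 p2 => sw q (fun q1 q2 => sw r (fun w1 w2 =>
    sw b (fun s1 s2 => f (chi a1 (chi p2 q1 w2) s1) (chi a2 (chi p1 q2 w1) s2)))))).
Proof.
rewrite sw_chi //; apply: sw_ext => a1 a2; rewrite sw_chi //.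
by split => ? /=; lin_tacf.
Qed.

Lemma crf1 c Z s G' : sw c (fun x y => cou y *: f (chi x Z s) G') = f (chi c Z s) G'.
Proof. by rewrite sw_cou_r //; lin_tacf. Qed.
Lemma crf2 c T Q r : sw c (fun x y => cou y *: f T (Gb u x Q r)) = f T (Gb u c Q r).
Proof. by rewrite sw_cou_r // /Gb; lin_tacf. Qed.

Lemma VL P Q P' Q' s1 s2 :
  sw u (fun v1 v2 => sw v1 (fun a1 a2 => sw v2 (fun w1 w2 =>
     f (chi a1 (chi P Q w2) s1) (chi a2 (chi P' Q' w1) s2)))) =
  f (Gb u P Q s1) (Gb u P' Q' s2).
Proof.
rewrite split4; try by move=> *; lin_tacf.
under sw_ext => v1 v2 do under sw_ext => x1 x2 do rewrite -pullf2 Kp' fZ2.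
under sw_ext => v1 v2 do rewrite crf1.
by rewrite -pullf1.
Qed.

Lemma RL Q Q' :
  sw u (fun r1 r2 => sw r1 (fun p1 p2 => sw r2 (fun s1 s2 =>
     f (Gb u p2 Q s1) (Gb u p1 Q' s2)))) = f (th Q) (th Q').
Proof.
rewrite split4; try by move=> *; rewrite /Gb; lin_tacf.
under sw_ext => r1 r2 do under sw_ext => x1 x2 do rewrite -pullf1 Theta fZ1.
under sw_ext => r1 r2 do rewrite crf2.
by rewrite -pullf2 -th_alt.
Qed.

Lemma th_cop c : sw (th c) f = sw c (fun x y => f (th x) (th y)).
Proof.
rewrite th_alt /Gb swsw.
under sw_ext => r1 r2 do rewrite swsw.
under sw_ext => r1 r2 do under sw_ext => v1 v2 do rewrite sw_chi2.
under sw_ext => r1 r2 do under sw_ext => v1 v2 do rewrite sw_exch.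
under sw_ext => r1 r2 do rewrite sw_exch.
under sw_ext => r1 r2 do under sw_ext => p1 p2 do under sw_ext => v1 v2 do rewrite sw_exch.
under sw_ext => r1 r2 do under sw_ext => p1 p2 do rewrite sw_exch.
under sw_ext => r1 r2 do under sw_ext => p1 p2 do under sw_ext => q1 q2 do
  under sw_ext => v1 v2 do under sw_ext => a1 a2 do rewrite sw_exch.
under sw_ext => r1 r2 do under sw_ext => p1 p2 do under sw_ext => q1 q2 do
  under sw_ext => v1 v2 do rewrite sw_exch.
under sw_ext => r1 r2 do under sw_ext => p1 p2 do under sw_ext => q1 q2 do rewrite sw_exch.
under sw_ext => r1 r2 do under sw_ext => p1 p2 do under sw_ext => q1 q2 do
  under sw_ext => s1 s2 do rewrite VL.
under sw_ext => r1 r2 do rewrite sw_exch.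
rewrite sw_exch.
by under sw_ext => q1 q2 do rewrite RL.
Qed.
End Delta.

End Heap.

Theorem mainTheorem14 (F : fieldType) (V : lmodType F)
  (cop : V -> seq (V * V)) (cou : V -> F) (chi : V -> V -> V -> V) :
  coalgebra cop cou ->
  (exists v : V, v != 0) ->
  hopf_heap cop cou chi ->
  (exists theta : V -> V, grunspan cop cou chi theta) /\
  (forall e : V, cou e = 1 -> grunspan cop cou chi (heap_theta cop chi e)).
Proof.
move=> Hco [v hv] Hh.
have main : forall e : V, cou e = 1 -> grunspan cop cou chi (heap_theta cop chi e).
  move=> e He; split; last first.
    by move=> a b c d e'; exact: (grunspan_th Hco Hh He).
  split.
  - exact: (th_lin Hco Hh He).
  - move=> c W f bf; rewrite big_map /=.
    exact: (th_cop Hco Hh He bf c).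
  - move=> c; exact: (th_cou Hco Hh He).
split; last exact: main.
case: (boolP (has (fun p => cou p.1 != 0) (cop v))) => [/hasP [p _ hp] | hn].
  exists (heap_theta cop chi ((cou p.1)^-1 *: p.1)); apply: main.
  by rewrite (couZ Hco) mulVf.
exfalso; move/negP: hv; apply; apply/eqP.
case: Hco => _ _ _ hc _; rewrite -(hc v) big1_seq // => p hp.
have : ~~ (cou p.1 != 0) by apply: (contra _ hn) => h; apply/hasP; exists p.
by rewrite negbK => /eqP ->; rewrite scale0r.
Qed.
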